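(* Assume Hypothesis (H). Let $b=b_1+b_2$ where $b_1,b_2:\mathbb R^n\times\mathbb R^n\to\mathbb R^n$ are bilinear with $b_i(x,y)\geq 0$ for all $x,y\geq 0$, and let $M=N-P$ where $N$ is an M-matrix and $P\geq 0$. Let $x_0$ satisfy $0\leq x_0\leq x_\ast$ and $F(x_0)\leq 0$ (e.g. $x_0=0$), and consider the iteration $$\big(N-b_1(\cdot,x_k)\big)x_{k+1}=a+Px_k+b_2(x_k,x_k),\quad k\geq 0.$$ Then: (1) $N-b_1(\cdot,x_k)$ is nonsingular for all $k$, so the iteration is well defined; (2) $x_k\leq x_{k+1}\leq x_\ast$ for all $k$, and $x_k\to x_\ast$ as $k\to\infty$; (3) $F(x_k)\leq 0$ for all $k$.
   Context: Inequalities between vectors/matrices are componentwise. A Z-matrix is a real square matrix with nonpositive off-diagonal entries; an M-matrix is a matrix $sI-P$ with $P\geq0$ entrywise and $s\geq\rho(P)$ ($\rho$ = spectral radius). Let $M\in\mathbb R^{n\times n}$ be a nonsingular M-matrix, $a\in\mathbb R^n$ with $a\geq 0$, and $b:\mathbb R^n\times\mathbb R^n\to\mathbb R^n$ a bilinear map (not necessarily symmetric) with $b(x,y)\geq 0$ whenever $x,y\geq 0$. A solution of $Mx=a+b(x,x)$ means a vector $x\geq 0$ satisfying it; a solution $x_\ast$ is minimal if $x_\ast\leq y$ for every solution $y$. $F(x):=Mx-a-b(x,x)$. For a bilinear map $c$ and $x\in\mathbb R^n$, $c(x,\cdot)$ and $c(\cdot,x)$ denote the $n\times n$ matrices of $y\mapsto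 c(x,y)$ and $y\mapsto c(y,x)$; $F'_x:=M-b(x,\cdot)-b(\cdot,x)$. Hypothesis (H): the equation has a minimal solution $x_\ast$, $x_\ast>0$ (all components strictly positive), and either $F'_{x_\ast}$ is nonsingular, or $F'_{x_\ast}$ is irreducible and $F'_x\neq F'_{x_\ast}$ for every $x$ with $0\leq x\leq x_\ast$, $x\neq x_\ast$. *)

(* Defs.v *)
From Stdlib Require Import Reals Lra Lia.
Open Scope R_scope.

(* Vectors in R^n are functions nat -> R (only indices i < n matter);
   n x n matrices are functions nat -> nat -> R (only i, j < n matter). *)
Definition vec := nat -> R.
Definition mat := nat -> nat -> R.

Fixpoint vsum (n : nat) (f : nat -> R) : R :=
  match n with O => 0 | S m => vsum m f + f m end.

Definition mv (n : nat) (A : mat) (x : vec) : vec :=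
  fun i => vsum n (fun j => A i j * x j).

Definition msub (A B : mat) : mat := fun i j => A i j - B i j.
Definition vadd (x y : vec) : vec := fun i => x i + y i.
Definition vsub (x y : vec) : vec := fun i => x i - y i.

Definition vle (n : nat) (x y : vec) : Prop := forall i, (i < n)%nat -> x i <= y i.
Definition vlt (n : nat) (x y : vec) : Prop := forall i, (i < n)%nat -> x i < y i.
Definition vzero : vec := fun _ => 0.
Definition mnonneg (n : nat) (A : mat) : Prop :=
  forall i j, (i < n)%nat -> (j < n)%nat -> 0 <= A i j.
Definition veq (n : nat) (x y : vec) : Prop := forall i, (i < n)%nat -> x i = y i.
Definition meq (n : nat) (A B : mat) : Prop :=
  forall i j, (i < n)%nat -> (j < n)%nat -> A i j = B i j.

(* A bilinear map b : R^n x R^n -> R^n, written through its coefficient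
   tensor: b(x,y)_i = sum_j sum_k B i j k x_j y_k (every bilinear map has
   this form). *)
Definition tensor := nat -> nat -> nat -> R.
Definition bil (n : nat) (B : tensor) (x y : vec) : vec :=
  fun i => vsum n (fun j => vsum n (fun k => B i j k * x j * y k)).
Definition tadd (B1 B2 : tensor) : tensor := fun i j k => B1 i j k + B2 i j k.

(* b(x,.) : the matrix of y |-> b(x,y) *)
Definition bil_l (n : nat) (B : tensor) (x : vec) : mat :=
  fun i k => vsum n (fun j => B i j k * x j).
(* b(.,x) : the matrix of y |-> b(y,x) *)
Definition bil_r (n : nat) (B : tensor) (x : vec) : mat :=
  fun i j => vsum n (fun k => B i j k * x k).

Definition bil_nonneg (n : nat) (B : tensor) : Prop :=
  forall x y, vle n vzero x -> vle n vzero y -> vle n vzero (bil n B x y).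

Definition nonsingular (n : nat) (A : mat) : Prop :=
  forall x, veq n (mv n A x) vzero -> veq n x vzero.

(* Irreducible: there is no nonempty proper index set I with
   A i j = 0 for all i in I, j not in I (i.e. A is not permutation-similar
   to a block upper-triangular matrix). *)
Definition irreducible (n : nat) (A : mat) : Prop :=
  ~ exists S : nat -> bool,
      (exists i, (i < n)%nat /\ S i = true) /\
      (exists j, (j < n)%nat /\ S j = false) /\
      (forall i j, (i < n)%nat -> (j < n)%nat -> S i = true -> S j = false ->
                   A i j = 0).

(* al + i*be is a (complex) eigenvalue of the real matrix P: there is a
   nonzero complex vector u + i v with P(u + i v) = (al + i be)(u + i v). *)
Definition is_cplx_eigenvalue (n : nat) (P : mat) (al be : R) : Prop :=
  exists u v : vec,
    (exists i, (i < n)%nat /\ (u i <> 0 \/ v i <> 0)) /\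
    (forall i, (i < n)%nat ->
        mv n P u i = al * u i - be * v i /\
        mv n P v i = be * u i + al * v i).

(* s >= rho(P), rho = spectral radius = max modulus of the eigenvalues. *)
Definition spec_radius_le (n : nat) (P : mat) (s : R) : Prop :=
  0 <= s /\
  forall al be, is_cplx_eigenvalue n P al be -> al ^ 2 + be ^ 2 <= s ^ 2.

Definition scal_id (s : R) : mat := fun i j => if Nat.eqb i j then s else 0.

Definition is_M_matrix (n : nat) (A : mat) : Prop :=
  exists (s : R) (P : mat),
    mnonneg n P /\ spec_radius_le n P s /\ meq n A (msub (scal_id s) P).

Definition is_solution (n : nat) (M : mat) (a : vec) (B : tensor) (x : vec) : Prop :=
  vle n vzero x /\ veq n (mv n M x) (vadd a (bil n B x x)).

Definition is_minimal_solution (n : nat) (M : mat) (a : vec) (B : tensor) (x : vec) : Prop :=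
  is_solution n M a B x /\ forall y, is_solution n M a B y -> vle n x y.

Definition Fmap (n : nat) (M : mat) (a : vec) (B : tensor) (x : vec) : vec :=
  vsub (vsub (mv n M x) a) (bil n B x x).

Definition Fder (n : nat) (M : mat) (B : tensor) (x : vec) : mat :=
  msub (msub M (bil_l n B x)) (bil_r n B x).

Definition hypH (n : nat) (M : mat) (a : vec) (B : tensor) (xs : vec) : Prop :=
  is_minimal_solution n M a B xs /\ vlt n vzero xs /\
  (nonsingular n (Fder n M B xs) \/
   (irreducible n (Fder n M B xs) /\
    forall x, vle n vzero x -> vle n x xs -> ~ veq n x xs ->
              ~ meq n (Fder n M B x) (Fder n M B xs))).

Definition is_iteration (n : nat) (N P : mat) (a : vec) (B1 B2 : tensor)
    (x0 : vec) (x : nat -> vec) : Prop :=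
  veq n (x O) x0 /\
  forall k, veq n (mv n (msub N (bil_r n B1 (x k))) (x (S k)))
                  (vadd (vadd a (mv n P (x k))) (bil n B2 (x k) (x k))).

(* Main.v *)
Require Import Defs.
From Stdlib Require Import Reals Lra Lia Classical ClassicalEpsilon.
Open Scope R_scope.

Lemma vsum_ext n f g : (forall j, (j < n)%nat -> f j = g j) -> vsum n f = vsum n g.
Proof. induction n; simpl; intros H; auto. rewrite IHn by (intros; apply H; lia). rewrite H by lia. reflexivity. Qed.

Lemma vsum_plus n f g : vsum n (fun j => f j + g j) = vsum n f + vsum n g.
Proof. induction n; simpl. ring. rewrite IHn. ring. Qed.
Lemma vsum_minus n f g : vsum n (fun j => f j - g j) = vsum n f - vsum n g.
Proof. induction n; simpl. ring. rewrite IHn. ring. Qed.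
Lemma vsum_scal_l n c f : vsum n (fun j => c * f j) = c * vsum n f.
Proof. induction n; simpl. ring. rewrite IHn. ring. Qed.
Lemma vsum_scal_r n c f : vsum n (fun j => f j * c) = vsum n f * c.
Proof. induction n; simpl. ring. rewrite IHn. ring. Qed.
Lemma vsum_zero n f : (forall j, (j < n)%nat -> f j = 0) -> vsum n f = 0.
Proof. induction n; simpl; intros H; auto. rewrite IHn by (intros; apply H; lia). rewrite H by lia. ring. Qed.
Lemma vsum_le n f g : (forall j, (j < n)%nat -> f j <= g j) -> vsum n f <= vsum n g.
Proof. induction n; simpl; intros H. lra. assert (f n <= g n) by (apply H; lia).
  assert (vsum n f <= vsum n g) by (apply IHn; intros; apply H; lia). lra. Qed.
Lemma vsum_nonneg n f : (forall j, (j < n)%nat -> 0 <= f j) -> 0 <= vsum n f.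
Proof. intros H. replace 0 with (vsum n (fun _ => 0)) by (apply vsum_zero; auto). apply vsum_le; auto. Qed.
Lemma vsum_nonneg_zero n f : (forall j, (j < n)%nat -> 0 <= f j) -> vsum n f = 0 -> forall j, (j < n)%nat -> f j = 0.
Proof. induction n; simpl; intros H Hs j Hj. lia.
  assert (0 <= f n) by (apply H; lia).
  assert (0 <= vsum n f) by (apply vsum_nonneg; intros; apply H; lia).
  destruct (Nat.eq_dec j n). subst; lra. apply IHn; try lia; try lra. intros; apply H; lia. Qed.
Lemma vsum_nonpos_zero n f : (forall j, (j < n)%nat -> f j <= 0) -> vsum n f = 0 -> forall j, (j < n)%nat -> f j = 0.
Proof. intros H Hs j Hj. assert (- f j = 0). { apply (vsum_nonneg_zero n (fun j => - f j)); auto.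
  intros; specialize (H j0 H0); lra. replace (vsum n (fun j => - f j)) with (- vsum n f). lra.
  clear. induction n; simpl. ring. rewrite <- IHn. ring. } lra. Qed.
Lemma vsum_single n f j : (j < n)%nat -> vsum n (fun l => f l * (if Nat.eqb l j then 1 else 0)) = f j.
Proof. induction n; simpl; intros Hj. lia. destruct (Nat.eq_dec j n).
  - subst. rewrite Nat.eqb_refl. rewrite vsum_zero. ring. intros l Hl.
    destruct (Nat.eqb_spec l n); [lia|ring].
  - rewrite IHn by lia. destruct (Nat.eqb_spec n j); [lia|ring]. Qed.
Lemma vsum_single' n f j : (j < n)%nat -> vsum n (fun l => (if Nat.eqb j l then 1 else 0) * f l) = f j.
Proof. intros Hj. rewrite <- (vsum_single n f j Hj). apply vsum_ext. intros l _.
  rewrite Nat.eqb_sym. ring. Qed.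
Lemma vsum_nonpos n f : (forall j, (j < n)%nat -> f j <= 0) -> vsum n f <= 0.
Proof. intros H. replace 0 with (vsum n (fun _ => 0)) by (apply vsum_zero; auto). apply vsum_le; auto. Qed.

Lemma mv_ext n A x y i : veq n x y -> mv n A x i = mv n A y i.
Proof. intros H. unfold mv. apply vsum_ext. intros; rewrite H; auto. Qed.
Lemma mv_vsub n A x y i : mv n A (vsub x y) i = mv n A x i - mv n A y i.
Proof. unfold mv, vsub. rewrite <- vsum_minus. apply vsum_ext; intros; ring. Qed.
Lemma mv_vadd n A x y i : mv n A (vadd x y) i = mv n A x i + mv n A y i.
Proof. unfold mv, vadd. rewrite <- vsum_plus. apply vsum_ext; intros; ring. Qed.
Lemma mv_msub n A B x i : mv n (msub A B) x i = mv n A x i - mv n B x i.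
Proof. unfold mv, msub. rewrite <- vsum_minus. apply vsum_ext; intros; ring. Qed.
Lemma mv_nonneg n A x i : mnonneg n A -> vle n vzero x -> (i < n)%nat -> 0 <= mv n A x i.
Proof. intros HA Hx Hi. unfold mv. apply vsum_nonneg. intros j Hj.
  apply Rmult_le_pos; [apply HA; auto | apply (Hx j Hj)]. Qed.

Lemma bil_ext n B x x' y y' i : veq n x x' -> veq n y y' -> bil n B x y i = bil n B x' y' i.
Proof. intros H1 H2. unfold bil. apply vsum_ext; intros j Hj. apply vsum_ext; intros k Hk.
  rewrite H1, H2; auto. Qed.
Lemma bil_vsub_l n B x x' y i : bil n B (vsub x x') y i = bil n B x y i - bil n B x' y i.
Proof. unfold bil, vsub. rewrite <- vsum_minus. apply vsum_ext; intros j Hj.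
  rewrite <- vsum_minus. apply vsum_ext; intros; ring. Qed.
Lemma bil_vsub_r n B x y y' i : bil n B x (vsub y y') i = bil n B x y i - bil n B x y' i.
Proof. unfold bil, vsub. rewrite <- vsum_minus. apply vsum_ext; intros j Hj.
  rewrite <- vsum_minus. apply vsum_ext; intros; ring. Qed.
Lemma bil_tadd n B1 B2 x y i : bil n (tadd B1 B2) x y i = bil n B1 x y i + bil n B2 x y i.
Proof. unfold bil, tadd. rewrite <- vsum_plus. apply vsum_ext; intros j Hj.
  rewrite <- vsum_plus. apply vsum_ext; intros; ring. Qed.
Lemma mv_bil_r n B x y i : mv n (bil_r n B y) x i = bil n B x y i.
Proof. unfold mv, bil_r, bil. apply vsum_ext; intros j Hj. rewrite <- vsum_scal_r.
  apply vsum_ext; intros; ring. Qed.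

Definition evec (j : nat) : vec := fun l => if Nat.eqb l j then 1 else 0.
Lemma evec_nonneg n j : vle n vzero (evec j).
Proof. intros l _. unfold evec, vzero. destruct (Nat.eqb l j); lra. Qed.

Lemma bil_coef n B i j k : bil_nonneg n B -> (i < n)%nat -> (j < n)%nat -> (k < n)%nat -> 0 <= B i j k.
Proof. intros H Hi Hj Hk. specialize (H (evec j) (evec k) (evec_nonneg n j) (evec_nonneg n k) i Hi).
  unfold bil, vzero, evec in H.
  erewrite vsum_ext in H. 2:{ intros l Hl. apply (vsum_single n (fun p => B i l p * (if Nat.eqb l j then 1 else 0)) k Hk). }
  simpl in H. rewrite (vsum_single n (fun l => B i l k) j Hj) in H. exact H. Qed.

Lemma bil_nonneg_tadd n B1 B2 : bil_nonneg n B1 -> bil_nonneg n B2 -> bil_nonneg n (tadd B1 B2).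
Proof. intros H1 H2 x y Hx Hy i Hi. unfold vzero. rewrite bil_tadd.
  specialize (H1 x y Hx Hy i Hi). specialize (H2 x y Hx Hy i Hi). unfold vzero in *. lra. Qed.

Lemma vle_sub n x y : vle n x y -> vle n vzero (vsub y x).
Proof. intros H i Hi. unfold vsub, vzero. specialize (H i Hi). lra. Qed.

Lemma bil_mono n B x x' y y' i : bil_nonneg n B -> vle n vzero x -> vle n x x' ->
  vle n vzero y -> vle n y y' -> (i < n)%nat -> bil n B x y i <= bil n B x' y' i.
Proof. intros HB Hx Hxx Hy Hyy Hi.
  assert (Hx' : vle n vzero x') by (intros l Hl; specialize (Hx l Hl); specialize (Hxx l Hl); unfold vzero in *; lra).
  assert (H1 := HB (vsub x' x) y' (vle_sub _ _ _ Hxx) (ltac:(intros l Hl; specialize (Hy l Hl); specialize (Hyy l Hl); unfold vzero in *; lra)) i Hi).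
  assert (H2 := HB x (vsub y' y) Hx (vle_sub _ _ _ Hyy) i Hi).
  unfold vzero in *. rewrite bil_vsub_l in H1. rewrite bil_vsub_r in H2. lra. Qed.

Lemma bil_nonneg_at n B x y i : bil_nonneg n B -> vle n vzero x -> vle n vzero y -> (i < n)%nat -> 0 <= bil n B x y i.
Proof. intros H Hx Hy Hi. apply (H x y Hx Hy i Hi). Qed.

Lemma gauss_ext m (A : mat) r (cc x' : vec) :
  (r < S m)%nat -> A r m <> 0 ->
  let tau := fun i => if Nat.eqb i r then m else i in
  veq m (mv m (fun i j => A (tau i) j - A (tau i) m * A r j / A r m) x')
        (fun i => cc (tau i) - A (tau i) m * cc r / A r m) ->
  veq (S m) (mv (S m) A (fun j => if Nat.eqb j m then (cc r - vsum m (fun j => A r j * x' j)) / A r m else x' j)) cc.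
Proof.
  intros Hr Hp tau Hx i Hi. unfold mv. simpl. rewrite Nat.eqb_refl.
  rewrite (vsum_ext m _ (fun j => A i j * x' j)).
  2:{ intros j Hj. destruct (Nat.eqb_spec j m); [lia|reflexivity]. }
  destruct (Nat.eq_dec i r) as [->|Hir].
  - field. auto.
  - assert (exists i', (i' < m)%nat /\ tau i' = i) as [i' [Hi' Ht]].
    { unfold tau. destruct (Nat.eq_dec i m) as [->|Him].
      + exists r. split. lia. rewrite Nat.eqb_refl. auto.
      + exists i. split. lia. destruct (Nat.eqb_spec i r); [lia|auto]. }
    specialize (Hx i' Hi'). unfold mv in Hx.
    rewrite (vsum_ext m _ (fun j => A (tau i') j * x' j - (A (tau i') m / A r m) * (A r j * x' j))) in Hx
      by (intros; field; auto).
    rewrite vsum_minus, vsum_scal_l in Hx. rewrite Ht in Hx.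
    assert (E : vsum m (fun j => A i j * x' j) = cc i - A i m * cc r / A r m + A i m / A r m * vsum m (fun j => A r j * x' j)) by lra.
    rewrite E. field. auto.
Qed.

Lemma gauss : forall n (A : mat) (c : vec),
  (exists x, veq n (mv n A x) c) \/
  (exists x, veq n (mv n A x) vzero /\ exists i, (i < n)%nat /\ x i <> 0).
Proof.
  induction n as [|m IH]; intros A c.
  - left. exists vzero. intros i Hi. lia.
  - destruct (classic (exists r, (r < S m)%nat /\ A r m <> 0)) as [[r [Hr Hp]] | Hno].
    + set (tau := fun i => if Nat.eqb i r then m else i).
      destruct (IH (fun i j => A (tau i) j - A (tau i) m * A r j / A r m)
                   (fun i => c (tau i) - A (tau i) m * c r / A r m)) as [[x' Hx'] | [x' [Hx' [i' [Hi' Hne]]]]].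
      * left. eexists. apply (gauss_ext m A r c x' Hr Hp Hx').
      * right. eexists. split.
        -- apply (gauss_ext m A r vzero x' Hr Hp). intros i Hi. rewrite Hx' by auto. unfold vzero. field. auto.
        -- exists i'. split. lia. destruct (Nat.eqb_spec i' m); [lia|auto].
    + right. exists (evec m). split.
      * intros i Hi. unfold mv, evec. rewrite (vsum_single (S m) (fun l => A i l) m) by lia.
        destruct (Req_dec (A i m) 0); auto. exfalso. apply Hno. exists i. auto.
      * exists m. split. lia. unfold evec. rewrite Nat.eqb_refl. lra.
Qed.

Lemma surj n A : nonsingular n A -> forall c, exists x, veq n (mv n A x) c.
Proof. intros H c. destruct (gauss n A c) as [? | [x [Hx [i [Hi Hne]]]]]; auto.
  exfalso. apply Hne. apply (H x Hx i Hi). Qed.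

Lemma argmax n (f : nat -> R) : (0 < n)%nat -> exists i0, (i0 < n)%nat /\ forall i, (i < n)%nat -> f i <= f i0.
Proof. induction n; intros Hn. lia. destruct n.
  - exists 0%nat. split. lia. intros i Hi. assert (i = 0%nat) by lia. subst; lra.
  - destruct IHn as [i0 [Hi0 H]]. lia.
    destruct (Rle_dec (f i0) (f (S n))).
    + exists (S n). split. lia. intros i Hi. destruct (Nat.eq_dec i (S n)). subst; lra.
      specialize (H i ltac:(lia)). lra.
    + exists i0. split. lia. intros i Hi. destruct (Nat.eq_dec i (S n)). subst; lra. apply H; lia.
Qed.

Definition Zmat n (A : mat) := forall i j, (i < n)%nat -> (j < n)%nat -> i <> j -> A i j <= 0.

Lemma zset n (A : mat) v y :
  Zmat n A -> vlt n vzero v -> vle n vzero (mv n A v) -> vle n vzero (mv n A y) ->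
  (exists i, (i < n)%nat /\ y i < 0) ->
  exists t, 0 < t /\
   (forall i, (i < n)%nat -> 0 <= y i + t * v i) /\
   (exists i0, (i0 < n)%nat /\ y i0 + t * v i0 = 0) /\
   (forall i, (i < n)%nat -> y i + t * v i = 0 ->
      mv n A v i = 0 /\ forall j, (j < n)%nat -> y j + t * v j <> 0 -> A i j = 0).
Proof.
  intros HZ Hv HAv HAy [i1 [Hi1 Hy1]].
  destruct (argmax n (fun i => - y i / v i) ltac:(lia)) as [i0 [Hi0 Hmax]].
  cbv beta in Hmax. set (t := - y i0 / v i0) in *.
  assert (Hvp : forall i, (i < n)%nat -> 0 < v i) by (intros i Hi; apply (Hv i Hi)).
  assert (Hz : forall i, (i < n)%nat -> 0 <= y i + t * v i).
  { intros i Hi. specialize (Hmax i Hi). specialize (Hvp i Hi).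
    assert (t * v i >= - y i / v i * v i) by (apply Rle_ge; apply Rmult_le_compat_r; lra).
    replace (- y i / v i * v i) with (- y i) in H by (field; lra). lra. }
  assert (Ht : 0 < t).
  { specialize (Hmax i1 Hi1). specialize (Hvp i1 Hi1).
    assert (0 < - y i1 / v i1) by (apply Rdiv_lt_0_compat; lra). lra. }
  exists t. split; [auto|split; [auto|split]].
  - exists i0. split; auto. unfold t. field. specialize (Hvp i0 Hi0). lra.
  - intros i Hi Hzi.
    set (z := fun j => y j + t * v j).
    assert (Eq : mv n A z i = mv n A y i + t * mv n A v i).
    { unfold mv, z. rewrite <- vsum_scal_l, <- vsum_plus. apply vsum_ext; intros; ring. }
    assert (Hterm : forall j, (j < n)%nat -> A i j * z j <= 0).
    { intros j Hj. destruct (Nat.eq_dec i j) as [<-|Hij].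
      - unfold z. rewrite Hzi. lra.
      - specialize (HZ i j Hi Hj Hij). specialize (Hz j Hj). unfold z.
        assert (0 <= (- A i j) * (y j + t * v j)) by (apply Rmult_le_pos; lra). lra. }
    assert (Hle : mv n A z i <= 0) by (apply vsum_nonpos; auto).
    specialize (HAy i Hi). specialize (HAv i Hi). unfold vzero in *.
    assert (0 <= t * mv n A v i) by (apply Rmult_le_pos; lra).
    assert (H0 : mv n A z i = 0) by lra.
    split.
    + assert (t * mv n A v i = 0) by lra. apply Rmult_integral in H1. destruct H1; lra.
    + intros j Hj Hzj. pose proof (vsum_nonpos_zero n (fun j => A i j * z j) Hterm H0 j Hj) as Hj0.
      simpl in Hj0. apply Rmult_integral in Hj0. destruct Hj0; auto. unfold z in H1. contradiction.
Qed.

Definition monotone n A := forall y, vle n vzero (mv n A y) -> vle n vzero y.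

Lemma mv_zero n A i : mv n A vzero i = 0.
Proof. unfold mv, vzero. apply vsum_zero. intros; ring. Qed.

Lemma monotone_nonsing n A : monotone n A -> nonsingular n A.
Proof. intros H y Hy i Hi.
  assert (H1 := H y (ltac:(intros j Hj; rewrite Hy; auto; unfold vzero; lra)) i Hi).
  assert (H2 := H (vsub vzero y) (ltac:(intros j Hj; rewrite mv_vsub, mv_zero, Hy; auto; unfold vzero; lra)) i Hi).
  unfold vzero, vsub in *. lra. Qed.

Lemma neg_exists n y : ~ vle n vzero y -> exists i, (i < n)%nat /\ y i < 0.
Proof. intros H. apply NNPP. intros H2. apply H. intros i Hi. unfold vzero.
  apply Rnot_lt_le. intros Hlt. apply H2. exists i. auto. Qed.

Lemma M_monotone n M v : Zmat n M -> nonsingular n M -> vlt n vzero v -> vle n vzero (mv n M v) -> monotone n M.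
Proof.
  intros HZ Hns Hv HMv y Hy. apply NNPP. intro Hneg. apply neg_exists in Hneg.
  destruct (zset n M v y HZ Hv HMv Hy Hneg) as [t [Ht [Hz [[i0 [Hi0 Hz0]] Hzs]]]].
  set (u := fun j => if Req_dec_T (y j + t * v j) 0 then v j else 0).
  set (M' := fun i j => if Req_dec_T (y i + t * v i) 0 then (if Nat.eqb i j then 1 else 0)
                        else if Req_dec_T (y j + t * v j) 0 then 0 else M i j).
  assert (K : forall w c, veq n (mv n M' w) c -> (forall i, (i < n)%nat -> y i + t * v i = 0 -> c i = 0) ->
     (forall i, (i < n)%nat -> y i + t * v i = 0 -> w i = 0) /\ veq n (mv n M w) c).
  { intros w c Hw Hc.
    assert (W0 : forall i, (i < n)%nat -> y i + t * v i = 0 -> w i = 0).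
    { intros i Hi Hzi. rewrite <- (Hc i Hi Hzi). rewrite <- (Hw i Hi). unfold mv.
      rewrite <- (vsum_single' n w i Hi) at 1. apply vsum_ext. intros j Hj.
      unfold M'. destruct (Req_dec_T (y i + t * v i) 0); [reflexivity|contradiction]. }
    split; auto. intros i Hi.
    destruct (Req_dec_T (y i + t * v i) 0) as [Hzi|Hzi].
    - rewrite (Hc i Hi Hzi). unfold mv. apply vsum_zero.
      intros j Hj. destruct (Req_dec_T (y j + t * v j) 0) as [e|e].
      * rewrite (W0 j Hj e). ring.
      * rewrite (proj2 (Hzs i Hi Hzi) j Hj e). ring.
    - rewrite <- (Hw i Hi). unfold mv. apply vsum_ext. intros j Hj. unfold M'.
      destruct (Req_dec_T (y i + t * v i) 0); [contradiction|].
      destruct (Req_dec_T (y j + t * v j) 0) as [e|e]; [rewrite (W0 j Hj e); ring|reflexivity]. }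
  assert (Hns' : nonsingular n M').
  { intros w Hw. destruct (K w vzero Hw) as [_ HMw]. { intros; reflexivity. } apply Hns; auto. }
  destruct (surj n M' Hns' (mv n M u)) as [w Hw].
  destruct (K w (mv n M u) Hw) as [W0 HMw].
  { intros i Hi Hzi. rewrite <- (proj1 (Hzs i Hi Hzi)). unfold mv. apply vsum_ext. intros j Hj.
    unfold u. destruct (Req_dec_T (y j + t * v j) 0) as [e|e]; [reflexivity|].
    rewrite (proj2 (Hzs i Hi Hzi) j Hj e). ring. }
  assert (Hd : veq n (vsub w u) vzero).
  { apply Hns. intros i Hi. rewrite mv_vsub, HMw by auto. unfold vzero. ring. }
  specialize (Hd i0 Hi0). specialize (W0 i0 Hi0 Hz0). specialize (Hv i0 Hi0).
  unfold vsub, vzero, u in *. destruct (Req_dec_T (y i0 + t * v i0) 0); [|contradiction]. lra.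
Qed.

Lemma cv_shift u l : Un_cv u l -> Un_cv (fun k => u (S k)) l.
Proof. intros H eps He. destruct (H eps He) as [N HN]. exists N. intros k Hk. apply HN. lia. Qed.
Lemma cv_const c : Un_cv (fun _ => c) c.
Proof. intros eps He. exists 0%nat. intros. unfold Rdist. rewrite Rminus_diag, Rabs_R0. auto. Qed.
Lemma cv_vsum n (f : nat -> nat -> R) g : (forall j, (j < n)%nat -> Un_cv (fun k => f k j) (g j)) ->
  Un_cv (fun k => vsum n (f k)) (vsum n g).
Proof. induction n; intros H; simpl. apply cv_const.
  apply CV_plus. apply IHn. intros; apply H; lia. apply H; lia. Qed.
Lemma cv_mv n A (x : nat -> vec) l i : (forall j, (j < n)%nat -> Un_cv (fun k => x k j) (l j)) ->
  Un_cv (fun k => mv n A (x k) i) (mv n A l i).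
Proof. intros H. unfold mv. apply (cv_vsum n (fun k j => A i j * x k j)). intros j Hj.
  apply CV_mult. apply cv_const. apply H; auto. Qed.
Lemma cv_bil n B (x y : nat -> vec) lx ly i :
  (forall j, (j < n)%nat -> Un_cv (fun k => x k j) (lx j)) ->
  (forall j, (j < n)%nat -> Un_cv (fun k => y k j) (ly j)) ->
  Un_cv (fun k => bil n B (x k) (y k) i) (bil n B lx ly i).
Proof. intros Hx Hy. unfold bil. apply (cv_vsum n (fun k j => vsum n (fun m => B i j m * x k j * y k m))).
  intros j Hj. apply (cv_vsum n (fun k m => B i j m * x k j * y k m)). intros m Hm.
  apply CV_mult. apply CV_mult. apply cv_const. apply Hx; auto. apply Hy; auto. Qed.
Lemma lim_le u l c : Un_cv u l -> (forall k, u k <= c) -> l <= c.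
Proof. intros H Hc. apply (Rle_cv_lim Hc H (cv_const c)). Qed.
Lemma lim_ge u l c : Un_cv u l -> (forall k, c <= u k) -> c <= l.
Proof. intros H Hc. apply (Rle_cv_lim Hc (cv_const c) H). Qed.

Lemma mono_conv (u : nat -> R) c : (forall k, u k <= u (S k)) -> (forall k, u k <= c) ->
  exists l, Un_cv u l /\ (forall k, u k <= l) /\ l <= c.
Proof. intros Hg Hb. assert (Hg' : Un_growing u) by exact Hg.
  destruct (growing_cv u Hg') as [l Hl]. exists c. intros x [k ->]. auto.
  exists l. split; auto. split. apply growing_ineq; auto. apply (lim_le u l c Hl Hb). Qed.

Lemma vec_choice n (P : nat -> R -> Prop) : (forall i, (i < n)%nat -> exists l, P i l) ->
  exists L : vec, forall i, (i < n)%nat -> P i (L i).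
Proof. intros H.
  exists (fun i => epsilon (inhabits 0) (fun l => (i < n)%nat -> P i l)).
  intros i Hi. apply (epsilon_spec (inhabits 0) (fun l => (i < n)%nat -> P i l)); auto.
  destruct (H i Hi) as [l Hl]. exists l. auto. Qed.

Lemma vec_conv n (x : nat -> vec) ub : (forall k, vle n (x k) (x (S k))) -> (forall k, vle n (x k) ub) ->
  exists L : vec, forall i, (i < n)%nat -> Un_cv (fun k => x k i) (L i) /\ (forall k, x k i <= L i) /\ L i <= ub i.
Proof. intros Hg Hb. apply (vec_choice n (fun i l => Un_cv (fun k => x k i) l /\ (forall k, x k i <= l) /\ l <= ub i)). intros i Hi.
  apply (mono_conv (fun k => x k i) (ub i)); intros k; [apply Hg|apply Hb]; auto. Qed.

Lemma cv_ext u v l : (forall k, u k = v k) -> Un_cv u l -> Un_cv v l.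
Proof. intros H Hu eps He. destruct (Hu eps He) as [N HN]. exists N. intros k Hk. rewrite <- H. auto. Qed.

Definition solve n (M : mat) (c : vec) : vec := epsilon (inhabits vzero) (fun z => veq n (mv n M z) c).
Lemma solve_spec n M c : nonsingular n M -> veq n (mv n M (solve n M c)) c.
Proof. intros H. unfold solve. apply (epsilon_spec (inhabits vzero) (fun z => veq n (mv n M z) c)).
  apply surj; auto. Qed.

Fixpoint fpiter n M a B k : vec :=
  match k with O => vzero | S k => solve n M (vadd a (bil n B (fpiter n M a B k) (fpiter n M a B k))) end.

Lemma supersol n M a B xh : monotone n M -> nonsingular n M -> vle n vzero a -> bil_nonneg n B ->
  vle n vzero xh -> vle n vzero (Fmap n M a B xh) ->
  exists l, is_solution n M a B l /\ vle n l xh.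
Proof.
  intros Hmo Hns Ha HB Hxh HF.
  set (w := fpiter n M a B).
  assert (HwS : forall k, veq n (mv n M (w (S k))) (vadd a (bil n B (w k) (w k)))).
  { intros k. apply solve_spec; auto. }
  assert (Hup : forall k, vle n vzero (w k) -> vle n (w k) xh -> vle n (w (S k)) xh).
  { intros k H0 H1. intros i Hi. assert (HH := Hmo (vsub xh (w (S k)))).
    assert (vle n vzero (vsub xh (w (S k)))).
    { apply HH. intros j Hj. rewrite mv_vsub, HwS by auto. unfold vadd, vzero.
      specialize (HF j Hj). unfold Fmap, vsub, vzero in HF.
      pose proof (bil_mono n B (w k) xh (w k) xh j HB H0 H1 H0 H1 Hj). lra. }
    specialize (H i Hi). unfold vsub, vzero in H. lra. }
  assert (Hinv : forall k, vle n vzero (w k) /\ vle n (w k) (w (S k)) /\ vle n (w (S k)) xh).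
  { induction k.
    - assert (H0 : vle n vzero (w 0%nat)) by (intros i Hi; unfold w; simpl; unfold vzero; lra).
      assert (H1 : vle n (w 0%nat) xh) by (intros i Hi; apply Hxh; auto).
      split; auto. split; [|apply Hup; auto].
      assert (Hw1 : vle n vzero (w 1%nat)).
      { apply Hmo. intros j Hj. rewrite HwS by auto.
        unfold vadd. specialize (Ha j Hj). pose proof (bil_nonneg_at n B (w 0%nat) (w 0%nat) j HB H0 H0 Hj).
        unfold vzero in *. lra. }
      intros i Hi. specialize (Hw1 i Hi). exact Hw1.
    - destruct IHk as [H0 [H1 H2]].
      assert (H0' : vle n vzero (w (S k))) by (intros i Hi; specialize (H0 i Hi); specialize (H1 i Hi); unfold vzero in *; lra).
      split; auto. split; [|apply Hup; auto].
      intros i Hi. assert (HH := Hmo (vsub (w (S (S k))) (w (S k)))).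
      assert (vle n vzero (vsub (w (S (S k))) (w (S k)))).
      { apply HH. intros j Hj. rewrite mv_vsub, HwS, HwS by auto. unfold vadd, vzero.
        pose proof (bil_mono n B (w k) (w (S k)) (w k) (w (S k)) j HB H0 H1 H0 H1 Hj). lra. }
      specialize (H i Hi). unfold vsub, vzero in H. lra. }
  destruct (vec_conv n w xh (fun k => proj1 (proj2 (Hinv k))) (fun k i Hi => (ltac:(
     destruct (Hinv k) as [_ [H1 H2]]; specialize (H1 i Hi); specialize (H2 i Hi); lra)))) as [L HL].
  exists L. split; [split|].
  - intros i Hi. destruct (HL i Hi) as [_ [Hb _]]. specialize (Hb 0%nat). unfold w in Hb; simpl in Hb. unfold vzero in *. lra.
  - intros i Hi.
    assert (C1 : Un_cv (fun k => mv n M (w (S k)) i) (mv n M L i)).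
    { apply (cv_mv n M (fun k => w (S k)) L i). intros j Hj. apply (cv_shift (fun k => w k j)). apply (HL j Hj). }
    assert (C2 : Un_cv (fun k => mv n M (w (S k)) i) (a i + bil n B L L i)).
    { apply (cv_ext (fun k => a i + bil n B (w k) (w k) i)). intros k. rewrite HwS; auto.
      apply CV_plus. apply cv_const. apply cv_bil; intros j Hj; apply (HL j Hj). }
    unfold vadd. apply (UL_sequence _ _ _ C1 C2).
  - intros i Hi. apply (HL i Hi).
Qed.

Lemma MM_Z n A : is_M_matrix n A -> Zmat n A.
Proof. intros [s [P [HP [_ Heq]]]] i j Hi Hj Hij. rewrite Heq by auto. unfold msub, scal_id.
  destruct (Nat.eqb_spec i j); [contradiction|]. specialize (HP i j Hi Hj). lra. Qed.

Lemma N_split n M N P x i : meq n M (msub N P) -> (i < n)%nat -> mv n N x i = mv n M x i + mv n P x i.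
Proof. intros H Hi. unfold mv. rewrite <- vsum_plus. apply vsum_ext. intros j Hj.
  rewrite H by auto. unfold msub. ring. Qed.

Lemma Fmap_eq n M a B x i : Fmap n M a B x i = mv n M x i - a i - bil n B x x i.
Proof. reflexivity. Qed.

Lemma mvP_mono n P x y i : mnonneg n P -> vle n x y -> (i < n)%nat -> mv n P x i <= mv n P y i.
Proof. intros HP H Hi. pose proof (mv_nonneg n P (vsub y x) i HP (vle_sub _ _ _ H) Hi).
  rewrite mv_vsub in H0. lra. Qed.

Lemma vle_trans n x y z : vle n x y -> vle n y z -> vle n x z.
Proof. intros H1 H2 i Hi. specialize (H1 i Hi). specialize (H2 i Hi). lra. Qed.
Lemma vle_refl n x : vle n x x.
Proof. intros i Hi. lra. Qed.

Lemma Ak_monotone n M N P a B1 B2 xs y :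
  Zmat n M -> Zmat n N -> bil_nonneg n B1 -> bil_nonneg n B2 -> mnonneg n P -> meq n M (msub N P) ->
  vle n vzero a -> is_solution n M a (tadd B1 B2) xs -> vlt n vzero xs ->
  (forall xh, vle n vzero xh -> vle n vzero (Fmap n M a (tadd B1 B2) xh) -> vle n xs xh) ->
  vle n vzero y -> vle n y xs -> monotone n (msub N (bil_r n B1 y)).
Proof.
  intros HZM HZN HB1 HB2 HP HMNP Ha [Hxs0 Hxs] Hxsp Hsup Hy0 Hys.
  assert (HB : bil_nonneg n (tadd B1 B2)) by (apply bil_nonneg_tadd; auto).
  assert (Hxs0' : vle n vzero xs) by auto.
  set (A := msub N (bil_r n B1 y)).
  assert (HZA : Zmat n A).
  { intros i j Hi Hj Hij. unfold A, msub. specialize (HZN i j Hi Hj Hij).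
    assert (0 <= bil_r n B1 y i j). { unfold bil_r. apply vsum_nonneg. intros k Hk.
      apply Rmult_le_pos. apply (bil_coef n); auto. apply (Hy0 k Hk). } lra. }
  assert (HAeq : forall i, (i < n)%nat -> mv n A xs i = a i + bil n B1 xs (vsub xs y) i + bil n B2 xs xs i + mv n P xs i).
  { intros i Hi. unfold A. rewrite mv_msub, mv_bil_r, (N_split n M N P xs i HMNP Hi).
    rewrite Hxs by auto. unfold vadd. rewrite bil_tadd, bil_vsub_r. ring. }
  assert (Hparts : forall i, (i < n)%nat -> 0 <= a i /\ 0 <= bil n B1 xs (vsub xs y) i /\ 0 <= bil n B2 xs xs i /\ 0 <= mv n P xs i).
  { intros i Hi. split; [apply (Ha i Hi)|]. split; [apply bil_nonneg_at; auto; apply vle_sub; auto|].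
    split; [apply bil_nonneg_at; auto|]. apply mv_nonneg; auto. }
  assert (HAxs : vle n vzero (mv n A xs)).
  { intros i Hi. rewrite HAeq by auto. destruct (Hparts i Hi) as [? [? [? ?]]]. unfold vzero. lra. }
  intros z Hz. apply NNPP. intro Hneg. apply neg_exists in Hneg.
  destruct (zset n A xs z HZA Hxsp HAxs Hz Hneg) as [t [Ht [Hzz [[i0 [Hi0 Hz0]] Hzs]]]].
  set (xh := fun j => if Req_dec_T (z j + t * xs j) 0 then 0 else xs j).
  assert (Hxh0 : vle n vzero xh).
  { intros j Hj. unfold xh, vzero. destruct (Req_dec_T (z j + t * xs j) 0). lra. apply (Hxs0 j Hj). }
  assert (Hxhs : vle n xh xs).
  { intros j Hj. unfold xh. destruct (Req_dec_T (z j + t * xs j) 0). apply (Hxs0 j Hj). lra. }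
  assert (HF : vle n vzero (Fmap n M a (tadd B1 B2) xh)).
  { intros i Hi. unfold vzero. rewrite Fmap_eq.
    destruct (Req_dec_T (z i + t * xs i) 0) as [Hzi|Hzi].
    - destruct (Hzs i Hi Hzi) as [HAi HAij].
      rewrite HAeq in HAi by auto. destruct (Hparts i Hi) as [Pa [Pb [Pc Pd]]].
      assert (HAxh : mv n A xh i = 0).
      { unfold mv. apply vsum_zero. intros j Hj. unfold xh.
        destruct (Req_dec_T (z j + t * xs j) 0) as [e|e]. ring. rewrite (HAij j Hj e). ring. }
      unfold A in HAxh. rewrite mv_msub, mv_bil_r, (N_split n M N P xh i HMNP Hi) in HAxh.
      pose proof (mv_nonneg n P xh i HP Hxh0 Hi).
      pose proof (mvP_mono n P xh xs i HP Hxhs Hi).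
      pose proof (bil_mono n B1 xh xh xh xs i HB1 Hxh0 (vle_refl n xh) Hxh0 Hxhs Hi).
      pose proof (bil_mono n B1 xh xs (vsub xs y) (vsub xs y) i HB1 Hxh0 Hxhs (vle_sub _ _ _ Hys) (vle_refl _ _) Hi).
      pose proof (bil_vsub_r n B1 xh xs y i).
      pose proof (bil_mono n B2 xh xs xh xs i HB2 Hxh0 Hxhs Hxh0 Hxhs Hi).
      rewrite bil_tadd. lra.
    - assert (Hd : mv n M (vsub xs xh) i <= 0).
      { unfold mv. apply vsum_nonpos. intros j Hj. unfold vsub, xh.
        destruct (Req_dec_T (z j + t * xs j) 0) as [e|e].
        + assert (i <> j) by (intros ->; contradiction).
          specialize (HZM i j Hi Hj H). specialize (Hxs0 j Hj). unfold vzero in Hxs0.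
          assert (0 <= (- M i j) * (xs j - 0)) by (apply Rmult_le_pos; lra). lra.
        + replace (xs j - xs j) with 0 by ring. lra. }
      rewrite mv_vsub in Hd. specialize (Hxs i Hi). unfold vadd in Hxs.
      pose proof (bil_mono n (tadd B1 B2) xh xs xh xs i HB Hxh0 Hxhs Hxh0 Hxhs Hi). lra. }
  specialize (Hsup xh Hxh0 HF i0 Hi0). unfold xh in Hsup.
  destruct (Req_dec_T (z i0 + t * xs i0) 0); [|contradiction]. specialize (Hxsp i0 Hi0). unfold vzero in Hxsp. lra.
Qed.

Lemma step n M N P a B1 B2 xs y :
  Zmat n M -> Zmat n N -> bil_nonneg n B1 -> bil_nonneg n B2 -> mnonneg n P -> meq n M (msub N P) ->
  vle n vzero a -> is_solution n M a (tadd B1 B2) xs -> vlt n vzero xs ->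
  (forall xh, vle n vzero xh -> vle n vzero (Fmap n M a (tadd B1 B2) xh) -> vle n xs xh) ->
  vle n vzero y -> vle n y xs -> vle n (Fmap n M a (tadd B1 B2) y) vzero ->
  forall z, veq n (mv n (msub N (bil_r n B1 y)) z) (vadd (vadd a (mv n P y)) (bil n B2 y y)) ->
  vle n y z /\ vle n z xs /\ vle n (Fmap n M a (tadd B1 B2) z) vzero.
Proof.
  intros HZM HZN HB1 HB2 HP HMNP Ha Hsol Hxsp Hsup Hy0 Hys HFy z Hz.
  pose proof (Ak_monotone n M N P a B1 B2 xs y HZM HZN HB1 HB2 HP HMNP Ha Hsol Hxsp Hsup Hy0 Hys) as Hmo.
  destruct Hsol as [Hxs0 Hxs].
  assert (Hyz : vle n y z).
  { intros i Hi. assert (H := Hmo (vsub z y)).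
    assert (vle n vzero (vsub z y)).
    { apply H. intros j Hj. rewrite mv_vsub, Hz by auto. rewrite mv_msub, mv_bil_r, (N_split n M N P y j HMNP Hj).
      specialize (HFy j Hj). rewrite Fmap_eq, bil_tadd in HFy. unfold vadd, vzero in *. lra. }
    specialize (H0 i Hi). unfold vsub, vzero in H0. lra. }
  assert (Hz0 : vle n vzero z) by (apply (vle_trans n vzero y z); auto).
  split; auto. split.
  - intros i Hi. assert (H := Hmo (vsub xs z)).
    assert (vle n vzero (vsub xs z)).
    { apply H. intros j Hj. rewrite mv_vsub, Hz by auto. rewrite mv_msub, mv_bil_r, (N_split n M N P xs j HMNP Hj).
      rewrite Hxs by auto. unfold vadd, vzero. rewrite bil_tadd.
      pose proof (mvP_mono n P y xs j HP Hys Hj).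
      pose proof (bil_mono n B1 xs xs y xs j HB1 Hxs0 (vle_refl _ _) Hy0 Hys Hj).
      pose proof (bil_mono n B2 y xs y xs j HB2 Hy0 Hys Hy0 Hys Hj). lra. }
    specialize (H0 i Hi). unfold vsub, vzero in H0. lra.
  - intros i Hi. rewrite Fmap_eq, bil_tadd. unfold vzero.
    specialize (Hz i Hi). rewrite mv_msub, mv_bil_r, (N_split n M N P z i HMNP Hi) in Hz. unfold vadd in Hz.
    pose proof (mvP_mono n P y z i HP Hyz Hi).
    pose proof (bil_mono n B1 z z y z i HB1 Hz0 (vle_refl _ _) Hy0 Hyz Hi).
    pose proof (bil_mono n B2 y z y z i HB2 Hy0 Hyz Hy0 Hyz Hi). lra.
Qed.

Fixpoint iter n N P a B1 B2 (x0 : vec) k : vec :=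
  match k with O => x0 | S k => let y := iter n N P a B1 B2 x0 k in
    solve n (msub N (bil_r n B1 y)) (vadd (vadd a (mv n P y)) (bil n B2 y y)) end.

Lemma Fmap_ext n M a B x y i : veq n x y -> Fmap n M a B x i = Fmap n M a B y i.
Proof. intros H. rewrite !Fmap_eq. rewrite (mv_ext n M x y i H), (bil_ext n B x y x y i H H). reflexivity. Qed.

Theorem mainTheorem9 (n : nat) (M N P : mat) (a : vec) (B1 B2 : tensor)
    (xs x0 : vec) :
  is_M_matrix n M -> nonsingular n M -> vle n vzero a ->
  bil_nonneg n B1 -> bil_nonneg n B2 ->
  hypH n M a (tadd B1 B2) xs ->
  is_M_matrix n N -> mnonneg n P -> meq n M (msub N P) ->
  vle n vzero x0 -> vle n x0 xs -> vle n (Fmap n M a (tadd B1 B2) x0) vzero ->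
  (exists x : nat -> vec, is_iteration n N P a B1 B2 x0 x) /\
  (forall x : nat -> vec, is_iteration n N P a B1 B2 x0 x ->
     (forall k, nonsingular n (msub N (bil_r n B1 (x k)))) /\
     (forall k, vle n (x k) (x (S k)) /\ vle n (x (S k)) xs) /\
     (forall i, (i < n)%nat -> Un_cv (fun k => x k i) (xs i)) /\
     (forall k, vle n (Fmap n M a (tadd B1 B2) (x k)) vzero)).
Proof.
  intros HMm HMns Ha HB1 HB2 [[Hsol Hmin] [Hxsp _]] HNm HP HMNP Hx00 Hx0s HF0.
  pose proof (MM_Z n M HMm) as HZM. pose proof (MM_Z n N HNm) as HZN.
  assert (HB : bil_nonneg n (tadd B1 B2)) by (apply bil_nonneg_tadd; auto).
  assert (HMmo : monotone n M).
  { apply (M_monotone n M xs HZM HMns Hxsp). intros i Hi. destruct Hsol as [Hs0 Hs].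
    rewrite Hs by auto. unfold vadd, vzero. specialize (Ha i Hi).
    pose proof (bil_nonneg_at n (tadd B1 B2) xs xs i HB Hs0 Hs0 Hi). unfold vzero in *. lra. }
  assert (Hsup : forall xh, vle n vzero xh -> vle n vzero (Fmap n M a (tadd B1 B2) xh) -> vle n xs xh).
  { intros xh H1 H2. destruct (supersol n M a (tadd B1 B2) xh HMmo HMns Ha HB H1 H2) as [l [Hl Hlx]].
    apply (vle_trans n xs l xh); auto. }
  set (good := fun y => vle n vzero y /\ vle n y xs /\ vle n (Fmap n M a (tadd B1 B2) y) vzero).
  assert (Hstep : forall y, good y -> nonsingular n (msub N (bil_r n B1 y)) /\
     forall z, veq n (mv n (msub N (bil_r n B1 y)) z) (vadd (vadd a (mv n P y)) (bil n B2 y y)) ->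
       vle n y z /\ vle n z xs /\ good z).
  { intros y [Hy0 [Hys HFy]]. split.
    - apply monotone_nonsing. apply (Ak_monotone n M N P a B1 B2 xs y); auto.
    - intros z Hz. destruct (step n M N P a B1 B2 xs y HZM HZN HB1 HB2 HP HMNP Ha Hsol Hxsp Hsup Hy0 Hys HFy z Hz) as [H1 [H2 H3]].
      split; auto. split; auto. split; auto. apply (vle_trans n vzero y z); auto. }
  assert (Hgood_ext : forall y y', veq n y y' -> good y -> good y').
  { intros y y' He [H1 [H2 H3]]. split; [|split].
    - intros i Hi. rewrite <- He by auto. apply H1; auto.
    - intros i Hi. rewrite <- He by auto. apply H2; auto.
    - intros i Hi. rewrite <- (Fmap_ext n M a (tadd B1 B2) y y' i He). apply H3; auto. }
  assert (Hg0 : good x0) by (split; auto).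
  split.
  - exists (iter n N P a B1 B2 x0). split. intros i Hi; reflexivity.
    assert (forall k, good (iter n N P a B1 B2 x0 k)).
    { induction k. exact Hg0. destruct (Hstep _ IHk) as [Hns Hz].
      simpl. apply Hz. apply solve_spec; auto. }
    intros k. destruct (Hstep _ (H k)) as [Hns _]. simpl. apply solve_spec; auto.
  - intros x [Hx0 Heq].
    assert (Hg : forall k, good (x k)).
    { induction k. apply (Hgood_ext x0). intros i Hi; symmetry; apply Hx0; auto. exact Hg0.
      destruct (Hstep _ IHk) as [_ Hz]. apply Hz. apply Heq. }
    assert (Hord : forall k, vle n (x k) (x (S k)) /\ vle n (x (S k)) xs).
    { intros k. destruct (Hstep _ (Hg k)) as [_ Hz]. destruct (Hz _ (Heq k)) as [? [? ?]]. auto. }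
    split; [intros k; apply (Hstep _ (Hg k))|]. split; [auto|]. split; [|intros k; apply (Hg k)].
    destruct (vec_conv n x xs (fun k => proj1 (Hord k)) (fun k => proj1 (proj2 (Hg k)))) as [L HL].
    assert (HLsol : is_solution n M a (tadd B1 B2) L).
    { split.
      - intros i Hi. destruct (HL i Hi) as [_ [Hb _]]. specialize (Hb 0%nat). destruct (Hg 0%nat) as [G0 _].
        specialize (G0 i Hi). unfold vzero in *. lra.
      - intros i Hi.
        assert (C1 : Un_cv (fun k => mv n (msub N (bil_r n B1 (x k))) (x (S k)) i) (mv n N L i - bil n B1 L L i)).
        { apply (cv_ext (fun k => mv n N (x (S k)) i - bil n B1 (x (S k)) (x k) i)).
          intros k. rewrite mv_msub, mv_bil_r. reflexivity.
          apply CV_minus. apply (cv_mv n N (fun k => x (S k)) L i). intros j Hj. apply (cv_shift (fun k => x k j)). apply (HL j Hj).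
          apply (cv_bil n B1 (fun k => x (S k)) x L L i); intros j Hj. apply (cv_shift (fun k => x k j)). apply (HL j Hj). apply (HL j Hj). }
        assert (C2 : Un_cv (fun k => mv n (msub N (bil_r n B1 (x k))) (x (S k)) i) (a i + mv n P L i + bil n B2 L L i)).
        { apply (cv_ext (fun k => a i + mv n P (x k) i + bil n B2 (x k) (x k) i)).
          intros k. rewrite (Heq k i Hi). reflexivity.
          apply CV_plus. apply CV_plus. apply cv_const. apply cv_mv; intros j Hj; apply (HL j Hj).
          apply cv_bil; intros j Hj; apply (HL j Hj). }
        pose proof (UL_sequence _ _ _ C1 C2) as E.
        rewrite (N_split n M N P L i HMNP Hi) in E. unfold vadd. rewrite bil_tadd. lra. }
    pose proof (Hmin L HLsol) as HxsL.
    intros i Hi. destruct (HL i Hi) as [Hc [_ Hb]]. specialize (HxsL i Hi).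
    replace (xs i) with (L i) by lra. exact Hc.
Qed.
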